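(* Let $m\ge 2$ and let $A=(a_{ij})$, $B=(b_{ij})$ be real $m\times m$ matrices with $0\le a_{ij},b_{ij}\le 1$ for all $i,j$, $\det(A)=\det(B)=0$, $AB^T=\mathbf{1}$ (the $m\times m$ all-ones matrix), and such that neither $A$ nor $B$ has all of its rows identical. Let $V:S^{m-1}\to S^{m-1}$ be given by $(V(x))_k=\big(\sum_{i=1}^m a_{ik}x_i\big)\big(\sum_{j=1}^m b_{jk}x_j\big)$, $k=1,\dots,m$. Let $C=(c_{ij})$ be a real $m\times m$ matrix with $c_{ij}\ge 0$ for all $i,j$, and for $k=1,\dots,m$ let $c^{(k)}=(c_{1k},c_{2k},\dots,c_{mk})^T$; suppose that for every $k=1,\dots,m$ either $Ac^{(k)}\le c^{(k)}$ or $Bc^{(k)}\le c^{(k)}$ (componentwise). Then for any $p_1,\dots,p_m\in\mathbb{R}^+$ the function $$\phi(x)=\prod_{k=1}^m\Big(\sum_{i=1}^m c_{ik}x_i\Big)^{p_k}$$ is a Lyapunov function for $V$, i.e. $\lim_{n\to\infty}\phi(x^{(n)})$ exists for every $x^{(0)}\in S^{m-1}$, where $x^{(n+1)}=V(x^{(n)})$.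
   Context: $S^{m-1}=\{x\in\mathbb{R}^m: x_i\ge 0,\ \sum_i x_i=1\}$. A continuous function $\phi:S^{m-1}\to\mathbb{R}$ is a Lyapunov function for $V$ if $\lim_{n\to\infty}\phi(x^{(n)})$ exists for every initial point $x^{(0)}\in S^{m-1}$ with $x^{(n+1)}=V(x^{(n)})$. *)

(* Defs.v *)
From HB Require Import structures.
From mathcomp Require Import all_boot all_order all_algebra.
From mathcomp Require Import all_classical all_reals all_analysis.
Set Implicit Arguments. Unset Strict Implicit. Unset Printing Implicit Defensive.
Import Order.TTheory GRing.Theory Num.Theory.
Import numFieldNormedType.Exports.
Local Open Scope ring_scope.
Local Open Scope classical_set_scope.

(* Points of R^m are row vectors 'rV[R]_m; the i-th coordinate is x 0 i. *)

Definition simplex {R : realType} (m : nat) : set 'rV[R]_m :=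
  [set x | (forall i, 0 <= x 0 i) /\ \sum_(i < m) x 0 i = 1].

Definition Vop {R : realType} (m : nat) (A B : 'M[R]_m) (x : 'rV[R]_m)
  : 'rV[R]_m :=
  \row_(k < m) ((\sum_(i < m) A i k * x 0 i) * (\sum_(j < m) B j k * x 0 j)).

Definition phiC {R : realType} (m : nat) (C : 'M[R]_m) (p : 'I_m -> R)
  (x : 'rV[R]_m) : R :=
  \prod_(k < m) ((\sum_(i < m) C i k * x 0 i) `^ (p k)).

Definition is_lyapunov {R : realType} (m : nat)
  (V : 'rV[R]_m -> 'rV[R]_m) (phi : 'rV[R]_m -> R) : Prop :=
  {within (@simplex R m), continuous phi} /\
  forall x0 : 'rV[R]_m, x0 \in @simplex R m ->
    cvgn (fun n : nat => phi (iter n V x0)).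

Definition rows_identical {R : realType} (m : nat) (M : 'M[R]_m) : Prop :=
  forall i j l : 'I_m, M i l = M j l.

Definition col_sub {R : realType} (m : nat) (M C : 'M[R]_m) (k : 'I_m) : Prop :=
  forall i : 'I_m, \sum_(j < m) M i j * C j k <= C i k.

(* Main.v *)
Require Import Defs.
From HB Require Import structures.
From mathcomp Require Import all_boot all_order all_algebra.
From mathcomp Require Import all_classical all_reals all_analysis.
From mathcomp Require Import ring.
Import Order.TTheory GRing.Theory Num.Theory.
Import numFieldNormedType.Exports.
Local Open Scope ring_scope.
Local Open Scope classical_set_scope.

Section Aux.
Variable R : realType.

Lemma cont_sum (T : topologicalType) (I : Type) (s : seq I) (F : I -> T -> R) :
  (forall i, continuous (F i)) -> continuous (fun x => \sum_(i <- s) F i x).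
Proof.
move=> hF; elim: s => [|a s IH].
  rewrite (_ : (fun _ => _) = fun _ => 0); first exact: cst_continuous.
  by apply/funext => x; rewrite big_nil.
rewrite (_ : (fun _ => _) = (F a + fun x => \sum_(i <- s) F i x)); last first.
  by apply/funext => x /=; rewrite big_cons.
by move=> x; apply: continuousD; [exact: hF|exact: IH].
Qed.

Lemma cont_prod (T : topologicalType) (I : Type) (s : seq I) (F : I -> T -> R) :
  (forall i, continuous (F i)) -> continuous (fun x => \prod_(i <- s) F i x).
Proof.
move=> hF; elim: s => [|a s IH].
  rewrite (_ : (fun _ => _) = fun _ => 1); first exact: cst_continuous.
  by apply/funext => x; rewrite big_nil.
rewrite (_ : (fun _ => _) = (F a \* fun x => \prod_(i <- s) F i x)); last first.
  by apply/funext => x /=; rewrite big_cons.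
by move=> x; apply: continuousM; [exact: hF|exact: IH].
Qed.

Lemma cont_pow0 (p : R) : 0 < p -> continuous (fun y : R => (Num.max y 0) `^ p).
Proof.
move=> p0 y.
have f0 : forall z : R, z <= 0 -> Num.max z 0 `^ p = 0.
  by move=> z hz; rewrite max_r // powR0 // gt_eqF.
have [y0|y0|->] := ltgtP y 0.
- rewrite /continuous_at f0 ?ltW //.
  apply: cvg_trans (@cvg_cst _ (0:R) _ (nbhs y) _).
  apply: near_eq_cvg; near=> z; rewrite f0 // ltW //; near: z; exact: (lt_nbhsl y0).
- have hc : {for (y:R), continuous (fun a : R => a `^ p)}.
    apply: differentiable_continuous; apply/derivable1_diffP.
    by apply: derivable_powR; rewrite in_itv /= andbT.
  rewrite /continuous_at max_l ?ltW //.
  apply: cvg_trans hc.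
  apply: near_eq_cvg; near=> z; rewrite /= max_l // ltW //; near: z; exact: (lt_nbhsr y0).
- apply/left_right_continuousP; rewrite f0 //; split.
  + apply: cvg_trans (@cvg_cst _ (0:R) _ (0:R)^'- _).
    apply: near_eq_cvg; near=> z; rewrite f0 // ltW //; near: z; exact: nbhs_left_lt.
  + apply: cvg_trans (powR_cvg0 p0).
    apply: near_eq_cvg; near=> z; rewrite /= max_l // ltW //; near: z; exact: nbhs_right_gt.
Unshelve. all: end_near. Qed.

End Aux.

Section Main.
Variables (R : realType) (m : nat).

Lemma simplex_ge0 (x : 'rV[R]_m) (i : 'I_m) : x \in @simplex R m -> 0 <= x 0 i.
Proof. by rewrite inE => -[h _]. Qed.

Lemma simplex_sum {x : 'rV[R]_m} : x \in @simplex R m -> \sum_(i < m) x 0 i = 1.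
Proof. by rewrite inE => -[_ h]. Qed.

Lemma lin_le1 (M : 'M[R]_m) (x : 'rV[R]_m) k :
  (forall i j, 0 <= M i j <= 1) -> x \in @simplex R m ->
  \sum_(l < m) M l k * x 0 l <= 1.
Proof.
move=> hM hx; rewrite -(simplex_sum hx); apply: ler_sum => l _.
by apply: ler_piMl; [exact: simplex_ge0|case/andP: (hM l k)].
Qed.

Lemma lin_ge0 (M : 'M[R]_m) (x : 'rV[R]_m) k :
  (forall i j, 0 <= M i j) -> x \in @simplex R m ->
  0 <= \sum_(l < m) M l k * x 0 l.
Proof.
move=> hM hx; apply: sumr_ge0 => l _; apply: mulr_ge0 => //; exact: simplex_ge0.
Qed.

Lemma key_ineq (M N C : 'M[R]_m) (x : 'rV[R]_m) k :
  (forall i j, 0 <= M i j <= 1) -> (forall i j, 0 <= N i j) ->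
  (forall i j, 0 <= C i j) -> col_sub N C k -> x \in @simplex R m ->
  \sum_(i < m) C i k * ((\sum_(l < m) M l i * x 0 l) * (\sum_(j < m) N j i * x 0 j))
  <= \sum_(i < m) C i k * x 0 i.
Proof.
move=> hM hN hC hs hx.
apply: (@le_trans _ _ (\sum_(i < m) C i k * (\sum_(j < m) N j i * x 0 j))).
  apply: ler_sum => i _; apply: ler_wpM2l => //.
  by apply: ler_piMl; [exact: lin_ge0|exact: lin_le1].
have -> : \sum_(i < m) C i k * (\sum_(j < m) N j i * x 0 j)
   = \sum_(j < m) x 0 j * (\sum_(i < m) N j i * C i k).
  under eq_bigr => i _ do rewrite mulr_sumr.
  rewrite exchange_big; apply: eq_bigr => j _; rewrite mulr_sumr.
  by apply: eq_bigr => i _; ring.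
apply: ler_sum => j _; rewrite mulrC; apply: ler_wpM2r; first exact: simplex_ge0.
exact: hs.
Qed.

Lemma V_simplex (A B : 'M[R]_m) (x : 'rV[R]_m) :
  (forall i j, 0 <= A i j <= 1) -> (forall i j, 0 <= B i j <= 1) ->
  A *m B^T = const_mx 1 -> x \in @simplex R m -> Vop A B x \in @simplex R m.
Proof.
move=> hA hB hAB hx; rewrite inE; split.
  move=> k; rewrite mxE; apply: mulr_ge0; apply: lin_ge0 => // i j.
  by case/andP: (hA i j). by case/andP: (hB i j).
have H : forall i j, \sum_(k < m) A i k * B j k = 1.
  move=> i j; move/matrixP: hAB => /(_ i j); rewrite !mxE => <-.
  by apply: eq_bigr => k _; rewrite mxE.
under eq_bigr => k _ do rewrite mxE.
rewrite (eq_bigr (fun k => \sum_(i < m) \sum_(j < m) (A i k * x 0 i) * (B j k * x 0 j))); last first.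
  by move=> k _; rewrite big_distrl; apply: eq_bigr => i _; rewrite big_distrr.
rewrite exchange_big.
rewrite (eq_bigr (fun i => \sum_(j < m) x 0 i * x 0 j)); last first.
  move=> i _; rewrite exchange_big; apply: eq_bigr => j _.
  rewrite -[RHS]mulr1 -(H i j) mulr_sumr; apply: eq_bigr => k _.
  by rewrite mulrACA mulrC [x 0 i * _]mulrC.
under eq_bigr => i _ do rewrite -mulr_sumr (simplex_sum hx) mulr1.
exact: simplex_sum.
Qed.

End Main.

Theorem corollary3p2 (R : realType) (m : nat) (hm : (2 <= m)%N)
  (A B C : 'M[R]_m) (p : 'I_m -> R)
  (hA : forall i j, 0 <= A i j <= 1)
  (hB : forall i j, 0 <= B i j <= 1)
  (hdetA : \det A = 0) (hdetB : \det B = 0)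
  (hAB : A *m B^T = const_mx 1)
  (hAr : ~ rows_identical A) (hBr : ~ rows_identical B)
  (hC : forall i j, 0 <= C i j)
  (hCk : forall k, col_sub A C k \/ col_sub B C k)
  (hp : forall k, 0 < p k) :
  is_lyapunov (Vop A B) (phiC C p).
Proof.
have hA0 : forall i j, 0 <= A i j by move=> i j; case/andP: (hA i j).
have hB0 : forall i j, 0 <= B i j by move=> i j; case/andP: (hB i j).
have mono : forall x, x \in @simplex R m -> phiC C p (Vop A B x) <= phiC C p x.
  move=> x hx; rewrite /phiC; apply: ler_prod => k _; apply/andP; split.
    exact: powR_ge0.
  have hVx := @V_simplex R m A B x hA hB hAB hx.
  apply: ge0_ler_powR; first exact: ltW.
  - by rewrite nnegrE; apply: sumr_ge0 => i _; apply: mulr_ge0 => //; exact: simplex_ge0.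
  - by rewrite nnegrE; apply: sumr_ge0 => i _; apply: mulr_ge0 => //; exact: simplex_ge0.
  under eq_bigr => i _ do rewrite mxE.
  case: (hCk k) => hs.
  + rewrite (eq_bigr (fun i => C i k * ((\sum_(j < m) B j i * x 0 j) *
        (\sum_(l < m) A l i * x 0 l)))); first exact: key_ineq.
    by move=> i _; rewrite [X in _ * X]mulrC.
  + exact: key_ineq.
split.
  pose psi := fun x : 'rV[R]_m =>
    \prod_(k < m) (Num.max (\sum_(i < m) C i k * x 0 i) 0) `^ p k.
  apply: (@subspace_eq_continuous _ _ _ psi).
    move=> x hx; rewrite /psi /phiC; apply: eq_bigr => k _; rewrite max_l //.
    by apply: sumr_ge0 => i _; apply: mulr_ge0 => //; exact: simplex_ge0.
  apply: continuous_subspaceT; rewrite /psi.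
  apply: cont_prod => k x.
  apply: (@continuous_comp _ _ _ (fun x : 'rV[R]_m => \sum_(i < m) C i k * x 0 i)
     (fun y : R => (Num.max y 0) `^ p k)); last exact: cont_pow0.
  move: x; apply: cont_sum => i x.
  apply: continuousM; first exact: cst_continuous.
  exact: coord_continuous.
move=> x0 hx0.
have hit : forall n, iter n (Vop A B) x0 \in @simplex R m.
  by elim=> [|n IH] //=; exact: V_simplex.
apply: nonincreasing_is_cvgn.
  by apply/nonincreasing_seqP => n; rewrite iterS; exact: mono.
exists 0 => _ [n _ <-]; apply: prodr_ge0 => k _; exact: powR_ge0.
Qed.
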